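(* Let $\lambda$ be a regular cardinal and let $\mathcal{K}$ be a $\lambda$-accessible category. If $\mathcal{K}$ has an object that is not $(<\lambda)$-presentable and $\mathcal{K}$ has no proper $(\lambda,<\lambda)$-systems, then $\mathcal{K}$ has an object of presentability rank $\lambda$.
   Context: For a regular cardinal $\kappa$, a poset is $\kappa$-directed if every subset of size $<\kappa$ has an upper bound; a $\kappa$-directed diagram/colimit is one indexed by such a poset. An object $M$ is $\kappa$-presentable if $\mathrm{Hom}(M,-)$ preserves $\kappa$-directed colimits; $M$ is $(<\lambda)$-presentable if it is $\kappa$-presentable for some regular $\kappa < \lambda+\aleph_1$; the presentability rank of $M$ is the least regular $\kappa$ with $M$ $\kappa$-presentable. A $(\mu,<\lambda)$-system is a $\mu$-directed diagram $\langle M_i : i \in I\rangle$ of $(<\lambda)$-presentable objects; if it has colimit $M$ with colimit maps $f_i : M_i \to M$, it is proper if there is no $i \in I$ and morphism $g : M \to M_i$ with $f_i g = \mathrm{id}_M$. A category is $\lambda$-accessible if it has $\lambda$-directed colimits, has up to isomorphism only a set of $\lambda$-presentable objects, and every object is a $\lambda$-directed colimit of $\lambda$-presentable objects. *)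

(* Defs.v *)
Definition card_le (A B : Type) : Prop :=
  exists f : A -> B, forall x y, f x = f y -> x = y.
Definition card_lt (A B : Type) : Prop := card_le A B /\ ~ card_le B A.

Definition regular (K : Type) : Prop :=
  card_le nat K /\
  forall (I : Type) (F : I -> Type),
    card_lt I K -> (forall i, card_lt (F i) K) -> card_lt {i : I & F i} K.

(** kappa < lambda + aleph_1  (cardinal sum = max(lambda, aleph_1)),
    i.e. kappa < lambda or kappa < aleph_1 (= kappa countable). *)
Definition lt_plus_aleph1 (K L : Type) : Prop := card_lt K L \/ card_le K nat.

Record Category := {
  Ob :> Type;
  Hom : Ob -> Ob -> Type;
  idm : forall A, Hom A A;
  comp : forall {A B C}, Hom B C -> Hom A B -> Hom A C;
  comp_idl : forall A B (f : Hom A B), comp (idm B) f = f;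
  comp_idr : forall A B (f : Hom A B), comp f (idm A) = f;
  comp_assoc : forall A B C D (f : Hom C D) (g : Hom B C) (h : Hom A B),
      comp f (comp g h) = comp (comp f g) h }.
Arguments Hom {c} _ _.
Arguments idm {c} _.
Arguments comp {c A B C} _ _.

Definition is_iso {C : Category} (A B : C) : Prop :=
  exists (u : Hom A B) (v : Hom B A), comp u v = idm B /\ comp v u = idm A.

Definition directed (K : Type) {I : Type} (le : I -> I -> Prop) : Prop :=
  (forall i, le i i) /\
  (forall i j k, le i j -> le j k -> le i k) /\
  (forall i j, le i j -> le j i -> i = j) /\
  (forall (J : Type) (s : J -> I), card_lt J K -> exists u, forall j, le (s j) u).

Record Diagram (C : Category) (I : Type) (le : I -> I -> Prop) := {
  dob : I -> Ob C;
  dmap : forall {i j}, le i j -> Hom (dob i) (dob j);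
  dmap_id : forall i (h : le i i), dmap h = idm (dob i);
  dmap_comp : forall i j k (h1 : le i j) (h2 : le j k) (h3 : le i k),
      comp (dmap h2) (dmap h1) = dmap h3 }.
Arguments Diagram : clear implicits.
Arguments dob {C I le} _ _.
Arguments dmap {C I le} _ {i j} _.

Definition is_cocone {C : Category} {I : Type} {le : I -> I -> Prop}
  (D : Diagram C I le) {M : C} (f : forall i, Hom (dob D i) M) : Prop :=
  forall i j (h : le i j), comp (f j) (dmap D h) = f i.

Definition is_colimit {C : Category} {I : Type} {le : I -> I -> Prop}
  (D : Diagram C I le) {M : C} (f : forall i, Hom (dob D i) M) : Prop :=
  is_cocone D f /\
  forall (N : C) (g : forall i, Hom (dob D i) N), is_cocone D g ->
    exists u : Hom M N, (forall i, comp u (f i) = g i) /\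
      forall u' : Hom M N, (forall i, comp u' (f i) = g i) -> u' = u.

(** * kappa-presentable objects: Hom(M,-) preserves kappa-directed colimits,
    i.e. the canonical map colim_i Hom(M, D i) -> Hom(M, colim D) is a
    bijection (written out via the description of directed colimits of sets). *)
Definition presentable {C : Category} (K : Type) (M : C) : Prop :=
  forall (I : Type) (le : I -> I -> Prop) (D : Diagram C I le)
         (L : C) (f : forall i, Hom (dob D i) L),
    directed K le -> is_colimit D f ->
    (forall h : Hom M L, exists i (g : Hom M (dob D i)), comp (f i) g = h) /\
    (forall i j (g : Hom M (dob D i)) (g' : Hom M (dob D j)),
        comp (f i) g = comp (f j) g' ->
        exists k (hik : le i k) (hjk : le j k),
          comp (dmap D hik) g = comp (dmap D hjk) g').

Definition lt_presentable {C : Category} (L : Type) (M : C) : Prop :=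
  exists K : Type, regular K /\ lt_plus_aleph1 K L /\ presentable K M.

Definition has_rank {C : Category} (M : C) (L : Type) : Prop :=
  regular L /\ presentable L M /\
  forall K : Type, regular K -> presentable K M -> card_le L K.

Definition accessible (C : Category) (L : Type) : Prop :=
  (forall (I : Type) (le : I -> I -> Prop) (D : Diagram C I le),
      directed L le -> exists (M : C) (f : forall i, Hom (dob D i) M),
        is_colimit D f) /\
  (exists (S : Type) (F : S -> Ob C),
      (forall s, presentable L (F s)) /\
      forall M : C, presentable L M -> exists s, is_iso M (F s)) /\
  (forall M : C, exists (I : Type) (le : I -> I -> Prop) (D : Diagram C I le)
                        (f : forall i, Hom (dob D i) M),
      directed L le /\ (forall i, presentable L (dob D i)) /\ is_colimit D f).

Definition is_system {C : Category} (Mu L : Type) {I : Type}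
  {le : I -> I -> Prop} (D : Diagram C I le) : Prop :=
  directed Mu le /\ forall i, lt_presentable L (dob D i).

Definition proper_with {C : Category} {I : Type} {le : I -> I -> Prop}
  (D : Diagram C I le) {M : C} (f : forall i, Hom (dob D i) M) : Prop :=
  is_colimit D f /\
  ~ exists i (g : Hom M (dob D i)), comp (f i) g = idm M.

Definition no_proper_systems (C : Category) (Mu L : Type) : Prop :=
  forall (I : Type) (le : I -> I -> Prop) (D : Diagram C I le)
         (M : C) (f : forall i, Hom (dob D i) M),
    is_system Mu L D -> ~ proper_with D f.

(* Main.v *)
Require Import Defs.
From mathcomp Require all_boot boolp classical_sets.
From Stdlib Require Import Classical.
Module CmpM.
Import all_boot boolp classical_sets.
Local Open Scope classical_set_scope.
Lemma card_total (A B : Type) : card_le A B \/ card_le B A.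
Proof.
pose P := fun G : set (A * B) =>
  (forall a b b', G (a,b) -> G (a,b') -> b = b') /\
  (forall a a' b, G (a,b) -> G (a',b) -> a = a').
have [|G [[PG1 PG2] Gmax]] := @Zorn_bigcup _ P.
  move=> F FP Ftot; split.
  - move=> a b b' [X FX Xab] [Y FY Yab'].
    have [XY|YX] := Ftot _ _ FX FY.
    + exact: (FP _ FY).1 a b b' (XY _ Xab) Yab'.
    + exact: (FP _ FX).1 a b b' Xab (YX _ Yab').
  - move=> a a' b [X FX Xab] [Y FY Yab'].
    have [XY|YX] := Ftot _ _ FX FY.
    + exact: (FP _ FY).2 a a' b (XY _ Xab) Yab'.
    + exact: (FP _ FX).2 a a' b Xab (YX _ Yab').
have [hA|] := pselect (forall a, exists b, G (a, b)).
  left; exists (fun a => projT1 (cid (hA a))) => x y.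
  case: (cid (hA x)) => bx Hx; case: (cid (hA y)) => by' Hy /= E.
  by subst; exact: PG2 Hx Hy.
have [hB|] := pselect (forall b, exists a, G (a, b)).
  right; exists (fun b => projT1 (cid (hB b))) => x y.
  case: (cid (hB x)) => ax Hx; case: (cid (hB y)) => ay Hy /= E.
  by subst; exact: PG1 Hx Hy.
move=> /existsNP [b0 Hb0] /existsNP [a0 Ha0].
exfalso; apply: (Gmax (G `|` [set (a0, b0)])).
  split; first by move=> x Gx; left.
  move=> /(_ (a0, b0) (or_intror erefl)) H; apply: Ha0; by exists b0.
split.
- move=> a b b' H1 H2; case: H1 => [Hab|E1]; case: H2 => [Hab'|E2].
  + exact: PG1 Hab Hab'.
  + case: E2 => ? ?; subst; exfalso; apply: Ha0; by exists b.
  + case: E1 => ? ?; subst; exfalso; apply: Ha0; by exists b'.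
  + by case: E1 => _ ->; case: E2 => _ ->.
- move=> a a' b H1 H2; case: H1 => [Hab|E1]; case: H2 => [Hab'|E2].
  + exact: PG2 Hab Hab'.
  + case: E2 => ? ?; subst; exfalso; apply: Hb0; by exists a.
  + case: E1 => ? ?; subst; exfalso; apply: Hb0; by exists a'.
  + by case: E1 => -> _; case: E2 => -> _.
Qed.
End CmpM.

Lemma retract_presentable (C : Category) K (P M : C) (r : Hom P M) (s : Hom M P) :
  comp r s = idm M -> presentable K P -> presentable K M.
Proof.
intros Hrs HP I le D Lc f Hd Hc. destruct (HP I le D Lc f Hd Hc) as [H1 H2]. split.
- intro h. destruct (H1 (comp h r)) as [i [g Hg]]. exists i, (comp g s).
  rewrite comp_assoc, Hg, <- comp_assoc, Hrs, comp_idr. reflexivity.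
- intros i j g g' E.
  destruct (H2 i j (comp g r) (comp g' r)) as [k [hik [hjk Hk]]].
  { rewrite !comp_assoc, E. reflexivity. }
  exists k, hik, hjk.
  assert (E2 : comp (comp (dmap D hik) (comp g r)) s = comp (comp (dmap D hjk) (comp g' r)) s)
    by (rewrite Hk; reflexivity).
  rewrite <- !comp_assoc, Hrs, !comp_idr in E2. exact E2.
Qed.

Theorem lemma6p1 (L : Type) (C : Category) :
  regular L ->
  accessible C L ->
  (exists M : C, ~ lt_presentable L M) ->
  no_proper_systems C L L ->
  exists M : C, has_rank M L.
Proof.
intros HL HA [M0 HM0] Hnp.
destruct HA as [_ [_ H3]]. destruct (H3 M0) as [I [le [D [f [Hd [Hp Hc]]]]]].
destruct (classic (forall i, lt_presentable L (dob D i))) as [Hall|Hn].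
- exfalso. assert (Hsys : is_system L L D) by (split; auto).
  apply (Hnp I le D M0 f Hsys). split; [exact Hc|]. intros [i [g Hg]].
  destruct (Hall i) as [K [HK [HKL HKp]]]. apply HM0. exists K.
  split; [exact HK|split; [exact HKL|]].
  exact (retract_presentable C K _ _ (f i) g Hg HKp).
- apply not_all_ex_not in Hn. destruct Hn as [i Hi]. exists (dob D i).
  split; [exact HL|split; [apply Hp|]]. intros K HK HKp.
  destruct (CmpM.card_total L K) as [H|HKL]; [exact H|].
  destruct (classic (card_le L K)) as [H|HnLK]; [exact H|].
  exfalso; apply Hi. exists K. split; [exact HK|split; [|exact HKp]].
  left. split; assumption.
Qed.
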